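(* Let $\mathsf{B}\in\mathrm{IQC}(n,\mathbb{C})$. Then $\mathsf{B}$ admits an isotropic $2$-decomposition if and only if the period of $\mathsf{B}$ is even.
   Context: $\mathrm{D}(n,\mathbb{C})$ is the set of $n\times n$ positive semidefinite complex matrices of trace $1$. $\mathrm{IQC}(n,\mathbb{C})$ is the set of finite sets $\mathsf{B}\subseteq\mathrm{M}(n,\mathbb{C})$ with $\sum_{B\in\mathsf{B}}B^\dagger B=I$ such that $\rho\mapsto\sum_{B\in\mathsf{B}}B\rho B^\dagger$ has a unique fixed point in $\mathrm{D}(n,\mathbb{C})$, which is positive definite. An isotropic $2$-decomposition of $\mathsf{B}$ is an orthogonal direct sum decomposition $\mathbb{C}^n=U_1\oplus U_2$ into nonzero subspaces with $u^\dagger Bu'=0$ for all $u,u'\in U_i$, $B\in\mathsf{B}$, $i=1,2$. The period of $\mathsf{B}$ is the maximum integer $m$ for which there is an orthogonal direct sum decomposition $\mathbb{C}^n=U_1\oplus\cdots\oplus U_m$ into nonzero subspaces such that $B(U_{i-1})\le U_i$ for all $i\in[m]$ and all $B\in\mathsf{B}$, indices taken cyclically modulo $m$ in $[m]$. *)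

(* Defs.v *)
(* The complex field C is abstracted as an arbitrary
   numClosedFieldType (algebraically closed field with conjugation and the
   partial order of C). *)
From HB Require Import structures.
From mathcomp Require Import all_boot all_order all_algebra.
Set Implicit Arguments. Unset Strict Implicit. Unset Printing Implicit Defensive.
Import Order.TTheory GRing.Theory Num.Theory.
Local Open Scope ring_scope.

Section Defs.
Variable C : numClosedFieldType.

Definition adj (m p : nat) (A : 'M[C]_(m, p)) : 'M[C]_(p, m) :=
  (map_mx Num.conj A)^T.

Definition psd (n : nat) (A : 'M[C]_n) : Prop :=
  adj A = A /\ forall x : 'cV[C]_n, 0 <= (adj x *m A *m x) 0 0.
Definition pd (n : nat) (A : 'M[C]_n) : Prop :=
  adj A = A /\ forall x : 'cV[C]_n, x != 0 -> 0 < (adj x *m A *m x) 0 0.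

Definition density (n : nat) (rho : 'M[C]_n) : Prop := psd rho /\ \tr rho = 1.

Definition channel (n : nat) (Bs : seq 'M[C]_n) (rho : 'M[C]_n) : 'M[C]_n :=
  \sum_(B <- Bs) B *m rho *m adj B.

(* IQC(n,C); a finite set of matrices is a duplicate-free sequence *)
Definition IQC (n : nat) (Bs : seq 'M[C]_n) : Prop :=
  [/\ uniq Bs,
      \sum_(B <- Bs) adj B *m B = 1%:M &
      exists rho : 'M[C]_n,
        [/\ density rho, channel Bs rho = rho, pd rho &
            forall sigma, density sigma -> channel Bs sigma = sigma -> sigma = rho]].

(* membership of a column vector x in the subspace (row space) U *)
Definition inS (n : nat) (x : 'cV[C]_n) (U : 'M[C]_n) : bool := (x^T <= U)%MS.

Definition orth_decomp (n m : nat) (U : 'I_m -> 'M[C]_n) : Prop :=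
  [/\ (forall i, U i != 0),
      mxdirect (\sum_(i < m) U i),
      (\sum_(i < m) U i :=: 1%:M)%MS &
      forall i j, i != j -> forall x y : 'cV[C]_n,
        inS x (U i) -> inS y (U j) -> adj x *m y = 0].

Definition iso2_decomp (n : nat) (Bs : seq 'M[C]_n) (U : 'I_2 -> 'M[C]_n) : Prop :=
  orth_decomp U /\
  forall i (x y : 'cV[C]_n) B, B \in Bs -> inS x (U i) -> inS y (U i) ->
    adj x *m B *m y = 0.

Definition cyclic_decomp (n m : nat) (Bs : seq 'M[C]_n) (U : 'I_m -> 'M[C]_n) : Prop :=
  orth_decomp U /\
  forall i (x : 'cV[C]_n) B, B \in Bs -> inS x (U i) -> inS (B *m x) (U (ordS i)).

Definition is_period (n : nat) (Bs : seq 'M[C]_n) (p : nat) : Prop :=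
  (exists U : 'I_p -> 'M[C]_n, cyclic_decomp Bs U) /\
  forall m (U : 'I_m -> 'M[C]_n), cyclic_decomp Bs U -> (m <= p)%N.

End Defs.

(* Main.v *)
Require Import Defs.
From HB Require Import structures.
From mathcomp Require Import all_boot all_order all_algebra.
From Stdlib Require Import ClassicalEpsilon.
From mathcomp Require Import zify.
Set Implicit Arguments. Unset Strict Implicit. Unset Printing Implicit Defensive.
Import Order.TTheory GRing.Theory Num.Theory.
Local Open Scope ring_scope.

Section Basics.
Variable C : numClosedFieldType.

Lemma adjE m p (A : 'M[C]_(m,p)) i j : adj A i j = (A j i)^*.
Proof. by rewrite /adj !mxE. Qed.

Lemma adjK m p (A : 'M[C]_(m,p)) : adj (adj A) = A.
Proof. by apply/matrixP=> i j; rewrite !adjE conjCK. Qed.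

Lemma adjM m p q (A : 'M[C]_(m,p)) (B : 'M[C]_(p,q)) :
  adj (A *m B) = adj B *m adj A.
Proof. by rewrite /adj map_mxM trmx_mul. Qed.

Lemma adjD m p (A B : 'M[C]_(m,p)) : adj (A + B) = adj A + adj B.
Proof. by apply/matrixP=> i j; rewrite !(adjE, mxE) rmorphD. Qed.

Lemma adjN m p (A : 'M[C]_(m,p)) : adj (- A) = - adj A.
Proof. by apply/matrixP=> i j; rewrite !(adjE, mxE) rmorphN. Qed.

Lemma adjB m p (A B : 'M[C]_(m,p)) : adj (A - B) = adj A - adj B.
Proof. by rewrite adjD adjN. Qed.

Lemma adjZ m p a (A : 'M[C]_(m,p)) : adj (a *: A) = a^* *: adj A.
Proof. by apply/matrixP=> i j; rewrite !(adjE, mxE) rmorphM. Qed.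

Lemma adj0 m p : adj (0 : 'M[C]_(m,p)) = 0.
Proof. by apply/matrixP=> i j; rewrite !(adjE, mxE) rmorph0. Qed.

Lemma adj1 n : adj (1%:M : 'M[C]_n) = 1%:M.
Proof. by apply/matrixP=> i j; rewrite !(adjE, mxE) rmorph_nat eq_sym. Qed.

Lemma adj_sum m p (I : Type) (r : seq I) (P : pred I) (F : I -> 'M[C]_(m,p)) :
  adj (\sum_(i <- r | P i) F i) = \sum_(i <- r | P i) adj (F i).
Proof.
elim/big_rec2: _ => [|i A B _ <-]; first exact: adj0.
by rewrite adjD.
Qed.

Lemma mx11_0 (A : 'M[C]_1) : (A = 0) <-> (A 0 0 = 0).
Proof.
split=> [->|h]; first by rewrite mxE.
by apply/matrixP=> i j; rewrite !ord1 h mxE.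
Qed.

Lemma adj_self_sum n (x : 'cV[C]_n) :
  (adj x *m x) 0 0 = \sum_i `|x i 0| ^+ 2.
Proof.
rewrite mxE; apply: eq_bigr => i _; by rewrite adjE normCK mulrC.
Qed.

Lemma adj_self_ge0 n (x : 'cV[C]_n) : 0 <= (adj x *m x) 0 0.
Proof. by rewrite adj_self_sum sumr_ge0 // => i _; rewrite exprn_ge0. Qed.

Lemma adj_self0 n (x : 'cV[C]_n) : adj x *m x = 0 -> x = 0.
Proof.
move/mx11_0; rewrite adj_self_sum => /eqP; rewrite psumr_eq0 => [|i _]; last by rewrite exprn_ge0.
move/allP=> h; apply/matrixP=> i j; rewrite ord1 mxE.
by have := h i (mem_index_enum _); rewrite /= expf_eq0 /= normr_eq0 => /eqP.
Qed.

Section InS.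
Variable (n : nat).
Implicit Types (x y z : 'cV[C]_n) (U V : 'M[C]_n).

Lemma inS0 U : inS 0 U.
Proof. by rewrite /inS trmx0 sub0mx. Qed.

Lemma inSD x y U : inS x U -> inS y U -> inS (x + y) U.
Proof. by rewrite /inS linearD /=; apply: addmx_sub. Qed.

Lemma inSZ a x U : inS x U -> inS (a *: x) U.
Proof. by rewrite /inS linearZ /=; apply: scalemx_sub. Qed.

Lemma inSN x U : inS x U -> inS (- x) U.
Proof. by rewrite -scaleN1r; apply: inSZ. Qed.

Lemma inSB x y U : inS x U -> inS y U -> inS (x - y) U.
Proof. by move=> hx hy; apply: inSD => //; apply: inSN. Qed.

Lemma inS_sum (I : Type) (r : seq I) (P : pred I) (f : I -> 'cV[C]_n) U :
  (forall i, P i -> inS (f i) U) -> inS (\sum_(i <- r | P i) f i) U.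
Proof.
move=> h; elim/big_rec: _ => [|i x Pi hx]; first exact: inS0.
by apply: inSD => //; apply: h.
Qed.

Lemma inS_sub x U V : inS x U -> (U <= V)%MS -> inS x V.
Proof. by rewrite /inS => h1 h2; apply: submx_trans h2. Qed.

Lemma inS_cap x U V : inS x (U :&: V)%MS = inS x U && inS x V.
Proof. by rewrite /inS sub_capmx. Qed.

Lemma inS_row U i : inS (row i U)^T U.
Proof. by rewrite /inS trmxK row_sub. Qed.

Lemma inS1 x : inS x 1%:M.
Proof. by rewrite /inS submx1. Qed.

Lemma subS U V : (forall x, inS x U -> inS x V) -> (U <= V)%MS.
Proof.
move=> h; apply/row_subP=> i; have := h _ (inS_row U i).
by rewrite /inS trmxK.
Qed.

Lemma eq0S U : (forall x, inS x U -> x = 0) -> U = 0.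
Proof.
move=> h; apply/eqP; rewrite -submx0; apply: subS => x /h ->; exact: inS0.
Qed.

Lemma nz_inS U : U != 0 -> exists x, inS x U /\ x != 0.
Proof.
case/rowV0Pn=> v hv nz; exists v^T; split; first by rewrite /inS trmxK.
by apply: contra nz => /eqP h; rewrite -[v]trmxK h trmx0.
Qed.

Lemma inS_mul (w : 'rV[C]_n) U : inS (w *m U)^T U.
Proof. by rewrite /inS trmxK submxMl. Qed.

Lemma inS_sums (I : finType) (P : pred I) (U : I -> 'M[C]_n) x :
  inS x (\sum_(i | P i) U i)%MS ->
  exists xs : I -> 'cV[C]_n,
    (forall i, P i -> inS (xs i) (U i)) /\ x = \sum_(i | P i) xs i.
Proof.
rewrite /inS => hx; have [u hu] := sub_sumsmxP hx; exists (fun i => (u i *m U i)^T); split.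
  by move=> i _; exact: inS_mul.
by rewrite -[x]trmxK hu; rewrite linear_sum.
Qed.

Lemma inS_sumsI (I : finType) (P : pred I) (U : I -> 'M[C]_n) i x :
  P i -> inS x (U i) -> inS x (\sum_(i | P i) U i)%MS.
Proof. by move=> Pi h; apply: inS_sub h _; apply: (sumsmx_sup i). Qed.

Lemma orth_sum_l (I : finType) (P : pred I) (U : I -> 'M[C]_n) x (z : 'cV[C]_n) :
  inS x (\sum_(i | P i) U i)%MS ->
  (forall i, P i -> forall w, inS w (U i) -> adj w *m z = 0) -> adj x *m z = 0.
Proof.
move=> /inS_sums[xs [hxs ->]] h; rewrite adj_sum mulmx_suml big1 // => i Pi.
exact: h (hxs i Pi).
Qed.

Lemma orth_mxdirect (I : finType) (U : I -> 'M[C]_n) :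
  (forall i j, i != j -> forall x y, inS x (U i) -> inS y (U j) -> adj x *m y = 0) ->
  mxdirect (\sum_i U i).
Proof.
move=> h; apply/mxdirect_sumsP => i _; apply: eq0S => x; rewrite inS_cap => /andP[h1 h2].
apply: adj_self0; apply: (orth_sum_l h2) => j /andP[_ ji] w hw.
exact: h ji _ _ hw h1.
Qed.


Definition perp (K : 'M[C]_n) : 'M[C]_n := kermx (map_mx Num.conj K)^T.

Lemma adj_row_conj (K : 'M[C]_n) i : adj (row i K)^T = row i (map_mx Num.conj K).
Proof. by apply/matrixP=> a b; rewrite adjE !mxE. Qed.

Lemma inS_perpE K y : inS y (perp K) = (map_mx Num.conj K *m y == 0).
Proof. by rewrite /inS /perp sub_kermx -trmx_mul trmx_eq0. Qed.

Lemma perpP K y : reflect (forall x, inS x K -> adj x *m y = 0) (inS y (perp K)).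
Proof.
rewrite inS_perpE; apply: (iffP eqP) => [h x|h].
  rewrite /inS => /submxP[w hw].
  have -> : adj x = map_mx Num.conj w *m map_mx Num.conj K.
    by rewrite -map_mxM -hw /adj map_trmx.
  by rewrite -mulmxA h mulmx0.
apply/row_matrixP=> i; rewrite row_mul row0 -adj_row_conj; apply: h.
exact: inS_row.
Qed.

Lemma perp_orth K x y : inS x K -> inS y (perp K) -> adj x *m y = 0.
Proof. by move=> hx /perpP; apply. Qed.

Lemma perp_orth' K x y : inS x K -> inS y (perp K) -> adj y *m x = 0.
Proof.
by move=> hx hy; rewrite -[adj y *m x]adjK adjM adjK (perp_orth hx hy) adj0.
Qed.

Lemma perp_cap K : (K :&: perp K)%MS = 0.
Proof.
apply: eq0S => x; rewrite inS_cap => /andP[h1 h2]; apply: adj_self0.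
exact: perp_orth h1 h2.
Qed.

Lemma perp_full K : (1%:M <= K + perp K)%MS.
Proof.
rewrite sub1mx /row_full mxrank_disjoint_sum ?perp_cap //.
rewrite /perp mxrank_ker mxrank_tr mxrank_map subnKC //.
by have := mxrankS (submx1 K); rewrite mxrank1.
Qed.

Definition oproj K : 'M[C]_n := (proj_mx K (perp K))^T.

Lemma oprojE K y : (oproj K *m y)^T = y^T *m proj_mx K (perp K).
Proof. by rewrite trmx_mul trmxK. Qed.

Lemma oproj_in K y : inS (oproj K *m y) K.
Proof. by rewrite /inS oprojE proj_mx_sub. Qed.

Lemma oproj_id K y : inS y K -> oproj K *m y = y.
Proof.
move=> h; apply: trmx_inj; rewrite oprojE proj_mx_id //; exact: perp_cap.
Qed.

Lemma oproj_0 K y : inS y (perp K) -> oproj K *m y = 0.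
Proof.
move=> h; apply: trmx_inj; rewrite oprojE proj_mx_0 ?trmx0 //; exact: perp_cap.
Qed.

Lemma oproj_compl K y : inS (y - oproj K *m y) (perp K).
Proof.
rewrite /inS linearB /= oprojE; apply: proj_mx_compl_sub.
exact: submx_trans (submx1 _) (perp_full K).
Qed.

Lemma mx_ext (A B : 'M[C]_n) :
  (forall x y : 'cV[C]_n, adj x *m A *m y = adj x *m B *m y) -> A = B.
Proof.
move=> h; apply/matrixP=> i j.
have e M : (adj (delta_mx i ord0 : 'cV[C]_n) *m M *m (delta_mx j ord0 : 'cV[C]_n)) ord0 ord0 = M i j.
  have -> : adj (delta_mx i ord0 : 'cV[C]_n) = delta_mx ord0 i.
    by apply/matrixP=> a b; rewrite adjE !mxE rmorph_nat andbC.
  by rewrite -rowE -colE !mxE.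
by rewrite -e h e.
Qed.

Lemma oproj_adj K : adj (oproj K) = oproj K.
Proof.
apply: mx_ext => x y.
set P := oproj K.
have ex : x = P *m x + (x - P *m x) by rewrite addrC subrK.
have ey : y = P *m y + (y - P *m y) by rewrite addrC subrK.
have hx := oproj_compl K x; have hy := oproj_compl K y.
have px := oproj_in K x; have py := oproj_in K y.
rewrite -adjM -mulmxA.
rewrite [in LHS]ey [in RHS]ex mulmxDr adjD mulmxDl.
rewrite (perp_orth px hy) (perp_orth' py hx) addr0.
done.

Qed.


Lemma vec_ext (A B : 'M[C]_n) : (forall y : 'cV[C]_n, A *m y = B *m y) -> A = B.
Proof. by move=> h; apply: mx_ext => x y; rewrite -!mulmxA h. Qed.

Lemma delta_quad (M : 'M[C]_n) i :
  M i i = (adj (delta_mx i ord0 : 'cV[C]_n) *m M *m (delta_mx i ord0 : 'cV[C]_n)) ord0 ord0.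
Proof.
have -> : adj (delta_mx i ord0 : 'cV[C]_n) = delta_mx ord0 i.
  by apply/matrixP=> a b; rewrite adjE !mxE rmorph_nat andbC.
by rewrite -rowE -colE !mxE.
Qed.

Lemma channelZ (Bs : seq 'M[C]_n) c (r : 'M[C]_n) :
  channel Bs (c *: r) = c *: channel Bs r.
Proof.
rewrite /channel scaler_sumr; apply: eq_bigr => B _.
by rewrite -scalemxAr -scalemxAl.
Qed.

Lemma irred (Bs : seq 'M[C]_n) (Y : 'M[C]_n) : IQC Bs ->
  (forall B, B \in Bs -> Y *m B = B *m Y /\ Y *m adj B = adj B *m Y) ->
  exists c, Y = c%:M.
Proof.
case=> _ _ [rho [[[rhoH rhopsd] tr1] fix1 [_ rhopd] uniq1]] hY.
case: (posnP n) => [n0|npos].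
  by exists 0; apply/matrixP => i j; have := ltn_ord i; rewrite {2}n0.
have [l hl] : exists l, root (char_poly Y^T) l.
  by apply/closed_rootP; rewrite size_char_poly eqSS -lt0n.
move: hl; rewrite -eigenvalue_root_char => /eigenvalueP[v0 hv0 v0nz].
set K := eigenspace Y^T l.
have inK x : inS x K = (Y *m x == l *: x).
  apply/eigenspaceP/eqP => h.
    by apply: trmx_inj; rewrite trmx_mul linearZ /= h.
  by rewrite -trmx_mul h linearZ.
have Kinv B : B \in Bs -> forall x, inS x K -> inS (B *m x) K /\ inS (adj B *m x) K.
  move=> hB x; rewrite !inK => /eqP hx; have [e1 e2] := hY B hB.
  split; first by rewrite mulmxA e1 -mulmxA hx -scalemxAr.
  by rewrite mulmxA e2 -mulmxA hx -scalemxAr.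
set L := perp K.
have Linv B : B \in Bs -> forall y, inS y L -> inS (B *m y) L /\ inS (adj B *m y) L.
  move=> hB y hy; split; apply/perpP => x hx.
    by rewrite mulmxA -[B in adj x *m B]adjK -adjM; apply: perp_orth hy; case: (Kinv B hB x hx).
  by rewrite mulmxA -adjM; apply: perp_orth hy; case: (Kinv B hB x hx).
set P := oproj K.
have comm_gen (M : 'M[C]_n) :
    (forall x, inS x K -> inS (M *m x) K) -> (forall y, inS y L -> inS (M *m y) L) ->
    P *m M = M *m P.
  move=> hK hL; apply: vec_ext => y.
  have ey : y = P *m y + (y - P *m y) by rewrite addrC subrK.
  rewrite -!mulmxA [in LHS]ey mulmxDr mulmxDr.
  rewrite (oproj_0 (hL _ (oproj_compl K y))) addr0 oproj_id //.
  exact: hK (oproj_in K y).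
have PB B : B \in Bs -> P *m B = B *m P /\ P *m adj B = adj B *m P.
  move=> hB; split; apply: comm_gen => x hx.
  - by case: (Kinv B hB x hx).
  - by case: (Linv B hB x hx).
  - by case: (Kinv B hB x hx).
  - by case: (Linv B hB x hx).
have PH : adj P = P by apply: oproj_adj.
set sigma := P *m rho *m adj P.
have sfix : channel Bs sigma = sigma.
  rewrite /channel /sigma -[in RHS]fix1 /channel mulmx_sumr mulmx_suml.
  apply: eq_big_seq => B hB; have [e1 e2] := PB B hB.
  rewrite PH !mulmxA -e1 -[LHS]mulmxA e2 !mulmxA.
  done.
have squad x : (adj x *m sigma *m x) = adj (adj P *m x) *m rho *m (adj P *m x).
  by rewrite /sigma adjM adjK !mulmxA.
have sH : adj sigma = sigma by rewrite /sigma !adjM adjK rhoH mulmxA.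
have sge x : 0 <= (adj x *m sigma *m x) 0 0 by rewrite squad; apply: rhopsd.
have [x0 [hx0 x0nz]] : exists x, inS x K /\ x != 0.
  by exists v0^T; split; [rewrite /inS trmxK; apply/eigenspaceP | rewrite trmx_eq0].
have [i hi] : exists i, adj P *m (delta_mx i ord0 : 'cV[C]_n) != 0.
  case: (boolP [exists i : 'I_n, adj P *m (delta_mx i ord0 : 'cV[C]_n) != 0]) => [/existsP//|/existsPn hn].
  exfalso; move/eqP: x0nz; apply.
  suff P0 : P = 0 by rewrite -(oproj_id hx0) -/P P0 mul0mx.
  rewrite -PH; apply: vec_ext => y; rewrite mul0mx.
  have -> : y = \sum_j y j ord0 *: (delta_mx j ord0 : 'cV[C]_n).
    apply/matrixP=> a b; rewrite ord1 summxE (bigD1 a) //= big1 => [|j ja].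
      by rewrite !mxE !eqxx mulr1 addr0.
    by rewrite !mxE eq_sym (negbTE ja) mulr0.
  rewrite mulmx_sumr big1 // => j _; rewrite -scalemxAr.
  by have := hn j; rewrite negbK => /eqP ->; rewrite scaler0.
set t := \tr sigma.
have tpos : 0 < t.
  rewrite /t /mxtrace (bigD1 i) //= ltr_pwDl //.
    by rewrite delta_quad squad; apply: rhopd.
  by apply: sumr_ge0 => j _; rewrite delta_quad.
set s' := t^-1 *: sigma.
have dens : density s'.
  split; last by rewrite /s' mxtraceZ mulVf // gt_eqF.
  split; first by rewrite /s' adjZ sH geC0_conj // invr_ge0 ltW.
  move=> x; rewrite /s' -scalemxAr -scalemxAl mxE mulr_ge0 //.
  by rewrite invr_ge0 ltW.
have e : s' = rho by apply: uniq1 => //; rewrite /s' channelZ sfix.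
have L0 y : inS y L -> y = 0.
  move=> hy; apply/eqP; apply/negPn/negP => ynz.
  have := rhopd y ynz; rewrite -e /s' -scalemxAr -scalemxAl mxE squad PH.
  by rewrite (oproj_0 hy) adj0 !mul0mx mxE mulr0 ltxx.
exists l; apply: vec_ext => y.
have : y - P *m y = 0 by apply: L0; apply: oproj_compl.
move/eqP; rewrite subr_eq0 => /eqP ey.
have := oproj_in K y; rewrite -/P -ey inK => /eqP ->.
by rewrite mul_scalar_mx.
Qed.

End InS.

Section Cyc.
Variables (n m : nat) (Bs : seq 'M[C]_n) (U : 'I_m -> 'M[C]_n).
Hypothesis hU : cyclic_decomp Bs U.

Definition P (i : 'I_m) : 'M[C]_n := oproj (U i).

Lemma cyc_orth i j x y : i != j -> inS x (U i) -> inS y (U j) -> adj x *m y = 0.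
Proof. by case: hU => -[_ _ _ h] _ ij; apply: h. Qed.

Lemma cyc_perp i j y : i != j -> inS y (U j) -> inS y (perp (U i)).
Proof. by move=> ij hy; apply/perpP => x hx; apply: cyc_orth hx hy. Qed.

Lemma cyc_map i x B : B \in Bs -> inS x (U i) -> inS (B *m x) (U (ordS i)).
Proof. by case: hU => _ h; apply: h. Qed.

Lemma cyc_disj i j x : i != j -> inS x (U i) -> inS x (U j) -> x = 0.
Proof. by move=> ij h1 h2; apply: adj_self0; apply: cyc_orth h1 h2. Qed.

Lemma P_in i y : inS (P i *m y) (U i).
Proof. exact: oproj_in. Qed.

Lemma P_id i y : inS y (U i) -> P i *m y = y.
Proof. exact: oproj_id. Qed.

Lemma P_0 i j y : i != j -> inS y (U j) -> P i *m y = 0.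
Proof. by move=> ij hy; apply: oproj_0; apply: cyc_perp ij hy. Qed.

Lemma P_adj i : adj (P i) = P i.
Proof. exact: oproj_adj. Qed.

Lemma cyc_decomp y : exists xs : 'I_m -> 'cV[C]_n,
  [/\ forall i, inS (xs i) (U i), y = \sum_i xs i & forall j, P j *m y = xs j].
Proof.
have hy : inS y (\sum_i U i)%MS.
  case: hU => -[_ _ e _] _; apply: inS_sub (inS1 y) _; by rewrite e.
have [xs [hxs ey]] := inS_sums hy.
exists xs; split => // [i|j]; first exact: hxs.
rewrite ey mulmx_sumr (bigD1 j) //= P_id ?hxs // big1 ?addr0 // => i ij.
by apply: P_0; [rewrite eq_sym | apply: hxs].
Qed.

Lemma sumP : \sum_i P i = 1%:M.
Proof.
apply: vec_ext => y; rewrite mul1mx mulmx_suml.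
have [xs [hxs ey ePj]] := cyc_decomp y.
by rewrite [in RHS]ey; apply: eq_bigr => i _; rewrite ePj.
Qed.

Lemma PP i j : P i *m P j = if i == j then P i else 0.
Proof.
apply: vec_ext => y; rewrite -mulmxA; case: eqP => [<-|/eqP ij].
  by rewrite P_id // P_in.
by rewrite mul0mx; apply: P_0 ij (P_in _ _).
Qed.

Lemma BP B i : B \in Bs -> B *m P i = P (ordS i) *m B.
Proof.
move=> hB; apply: vec_ext => y; have [xs [hxs ey ePj]] := cyc_decomp y.
rewrite -!mulmxA ePj [in RHS]ey !mulmx_sumr (bigD1 i) //= P_id ?cyc_map ?hxs //.
rewrite big1 ?addr0 // => j ji; apply: P_0; last by apply: cyc_map; rewrite ?hxs.
by apply: contra ji => /eqP /ordS_inj ->.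
Qed.

Lemma PBadj B i : B \in Bs -> P i *m adj B = adj B *m P (ordS i).
Proof.
move=> hB; have := BP i hB => /(congr1 (@adj _ _ _)).
by rewrite !adjM !P_adj.
Qed.

Lemma kraus1 (x : 'cV[C]_n) : IQC Bs -> (forall B, B \in Bs -> B *m x = 0) -> x = 0.
Proof.
case=> _ e _ h; rewrite -[x]mul1mx -e mulmx_suml big1_seq // => B hB.
by rewrite -mulmxA h ?mulmx0.
Qed.

End Cyc.

Lemma orth_sum_r n (I : finType) (Pr : pred I) (U : I -> 'M[C]_n) (y z : 'cV[C]_n) :
  inS y (\sum_(i | Pr i) U i)%MS ->
  (forall i, Pr i -> forall w, inS w (U i) -> adj z *m w = 0) -> adj z *m y = 0.
Proof.
move=> hy h; have h0 : adj y *m z = 0.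
  apply: (orth_sum_l hy) => i Pi w hw.
  by rewrite -[adj w *m z]adjK adjM adjK (h i Pi w hw) adj0.
by rewrite -[adj z *m y]adjK adjM adjK h0 adj0.
Qed.

Lemma ord2_neq (j k : 'I_2) : j != k -> odd j != odd k.
Proof. by case: j k => [[|[|j]] hj] [[|[|k]] hk]. Qed.

Section DirA.
Variables (n m : nat) (Bs : seq 'M[C]_n) (U : 'I_m -> 'M[C]_n).
Hypothesis hU : cyclic_decomp Bs U.
Hypothesis meven : ~~ odd m.
Hypothesis m2 : (1 < m)%N.

Lemma odd_ordS (i : 'I_m) : odd (ordS i) = ~~ odd i.
Proof.
rewrite /=; have := ltn_ord i; rewrite leq_eqVlt => /orP[/eqP e|lt].
  have o : odd i.+1 = odd m by rewrite e.
  by rewrite e modnn /=; move: meven; rewrite -o /= negbK => ->.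
by rewrite modn_small.
Qed.

Definition VA (j : 'I_2) := (\sum_(i < m | odd i == odd j) U i)%MS.

Lemma VA_orth j k x y : j != k -> inS x (VA j) -> inS y (VA k) -> adj x *m y = 0.
Proof.
move=> jk hx hy; apply: (orth_sum_l hx) => i /eqP oi w hw.
apply: (orth_sum_r hy) => i' /eqP oi' w' hw'.
have ii' : i != i'.
  by apply: contra (ord2_neq jk) => /eqP ii; rewrite -oi -oi' ii.
exact: (@cyc_orth n m Bs U hU i i' w w' ii' hw hw').
Qed.

Lemma dirA : iso2_decomp Bs VA.
Proof.
have hnz : forall i, U i != 0 by case: hU => -[].
split; first split.
- move=> j; have jm : (j < m)%N by apply: leq_trans (ltn_ord j) m2.
  apply: contra (hnz (Ordinal jm)) => /eqP V0; rewrite -submx0 -V0.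
  by apply: (sumsmx_sup (Ordinal jm)).
- by apply: orth_mxdirect => j k jk x y; apply: VA_orth.
- apply/eqmxP/andP; split; first exact: submx1.
  have e : (\sum_(i < m) U i :=: 1%:M)%MS by case: hU => -[].
  apply: submx_trans (_ : (\sum_(i < m) U i <= _)%MS); first by rewrite e.
  apply/sumsmx_subP => i _; apply: submx_trans (sumsmx_sup (inord (odd i) : 'I_2) _ (submx_refl _)) => //.
  by apply: (sumsmx_sup i) => //; rewrite inordK ?oddb // ltnS leq_b1.
- by move=> j k jk x y; apply: VA_orth.
move=> j x y B hB hx hy; have [ys [hys ey]] := inS_sums hy.
rewrite ey mulmx_sumr big1 // => i /eqP oi.
rewrite -mulmxA; apply: (orth_sum_l hx) => i' /eqP oi' w hw.
have hi : inS (ys i) (U i) by apply: hys; rewrite oi.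
have ne : i' != ordS i.
  by apply/eqP => e; move: (odd_ordS i); rewrite -e oi oi'; case: (odd j).
exact: (@cyc_orth n m Bs U hU _ _ _ _ ne hw (cyc_map hU hB hi)).
Qed.

End DirA.

Lemma ord2_other (j k : 'I_2) : k != j -> k = ordS j.
Proof. by case: j k => [[|[|j]] hj] [[|[|k]] hk] //= _; apply: val_inj. Qed.

Lemma sum_ord2 (T : nmodType) (F : 'I_2 -> T) : \sum_(i < 2) F i = F ord0 + F ord_max.
Proof.
rewrite big_ord_recr big_ord1 /=; congr (F _ + F _); exact: val_inj.
Qed.

Lemma ordS_0 : ordS (ord0 : 'I_2) = ord_max. Proof. exact: val_inj. Qed.
Lemma ordS_1 : ordS (ord_max : 'I_2) = ord0. Proof. exact: val_inj. Qed.

Lemma iter_ordS_val N t (i : 'I_N) : val (iter t (@ordS N) i) = ((i + t) %% N)%N.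
Proof.
elim: t => [|t IH]; first by rewrite addn0 modn_small.
by rewrite iterS /= IH -addn1 modnDml addn1 addnS.
Qed.

Lemma inS_0 n (x : 'cV[C]_n) : inS x 0 -> x = 0.
Proof. by rewrite /inS submx0 trmx_eq0 => /eqP. Qed.

Section DirB.
Variables (n p : nat) (Bs : seq 'M[C]_n) (U : 'I_p -> 'M[C]_n) (V : 'I_2 -> 'M[C]_n).
Hypotheses (hIQC : IQC Bs) (hU : cyclic_decomp Bs U) (hV : iso2_decomp Bs V) (podd : odd p).

Lemma hV2 : cyclic_decomp Bs V.
Proof.
case: hV => hO hiso; split => // j x B hB hx.
have hV0 : cyclic_decomp [::] V by split => // ? ? ?; rewrite in_nil.
have [xs [hxs ey ePj]] := cyc_decomp hV0 (B *m x).
have xj : xs j = 0.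
  rewrite -ePj; apply: oproj_0; apply/perpP => w hw.
  by rewrite mulmxA; apply: hiso hB hw hx.
rewrite ey; apply: inS_sum => k _; case: (eqVneq k j) => [->|kj].
  by rewrite xj inS0.
by rewrite -(ord2_other kj); apply: hxs.
Qed.

Definition Q0 := P V ord0.
Definition Q1 := P V ord_max.
Definition Z := Q0 - Q1.

Lemma Q01 : Q0 + Q1 = 1%:M.
Proof. by rewrite /Q0 /Q1 -sum_ord2 (sumP hV2). Qed.

Lemma ZZ : Z *m Z = 1%:M.
Proof.
rewrite /Z mulmxBl !mulmxBr /Q0 /Q1 !(PP hV2) !eqxx.
have -> : (ord0 == ord_max :> 'I_2) = false by [].
have -> : (ord_max == ord0 :> 'I_2) = false by [].
by rewrite subr0 sub0r opprK -Q01.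
Qed.

Lemma ZB B : B \in Bs -> Z *m B = - (B *m Z).
Proof.
move=> hB; rewrite /Z mulmxBl mulmxBr /Q0 /Q1.
rewrite !(BP hV2 _ hB) ordS_0 ordS_1 opprB.
by [].
Qed.

Lemma ZBadj B : B \in Bs -> Z *m adj B = - (adj B *m Z).
Proof.
move=> hB; rewrite /Z mulmxBl mulmxBr /Q0 /Q1.
rewrite !(PBadj hV2 _ hB) ordS_0 ordS_1 opprB.
by [].
Qed.


Lemma BZ B : B \in Bs -> B *m Z = - (Z *m B).
Proof. by move=> hB; rewrite (ZB hB) opprK. Qed.

Lemma BadjZ B : B \in Bs -> adj B *m Z = - (Z *m adj B).
Proof. by move=> hB; rewrite (ZBadj hB) opprK. Qed.

Definition fs s (i : 'I_p) := iter s (@ordS p) i.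

Lemma fsS s i : fs s (ordS i) = ordS (fs s i).
Proof. by rewrite /fs -iterSr iterS. Qed.

Definition Ys s := \sum_i P U (fs s i) *m (Z *m P U i).

Lemma YB s B : B \in Bs -> B *m Ys s = - (Ys s *m B).
Proof.
move=> hB; rewrite /Ys mulmx_sumr mulmx_suml -sumrN.
rewrite [in RHS](reindex_inj (@ordS_inj p)); apply: eq_bigr => i _.
rewrite mulmxA (BP hU _ hB) -mulmxA [B *m (Z *m _)]mulmxA (BZ hB) mulNmx mulmxN.
rewrite -[Z *m B *m _]mulmxA (BP hU _ hB).
by rewrite fsS !mulmxA.
Qed.

Lemma YBadj s B : B \in Bs -> Ys s *m adj B = - (adj B *m Ys s).
Proof.
move=> hB; rewrite /Ys mulmx_sumr mulmx_suml -sumrN.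
rewrite [in RHS](reindex_inj (@ordS_inj p)); apply: eq_bigr => i _.
rewrite -mulmxA -[_ *m adj B]mulmxA (PBadj hU _ hB) [Z *m (adj B *m _)]mulmxA (ZBadj hB) mulNmx mulmxN.
rewrite !mulmxA (PBadj hU _ hB).
by rewrite fsS.
Qed.


Lemma fs_val s i : val (fs s i) = ((i + s) %% p)%N.
Proof.
elim: s => [|s IH]; first by rewrite addn0 modn_small.
by rewrite /fs iterS /= -/(fs s i) IH -addn1 modnDml addn1 addnS.
Qed.

Lemma Ys_scal s : exists c, Ys s = c *: Z.
Proof.
have [c hc] : exists c, Z *m Ys s = c%:M.
  apply: (irred hIQC) => B hB; split.
    have e : Ys s *m B = - (B *m Ys s) by rewrite (YB s hB) opprK.
    by rewrite -mulmxA e mulmxN [Z *m (B *m _)]mulmxA (ZB hB) mulNmx opprK mulmxA.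
  by rewrite -mulmxA (YBadj s hB) mulmxN [Z *m (adj B *m _)]mulmxA (ZBadj hB) mulNmx opprK mulmxA.
exists c; by rewrite -[Ys s]mul1mx -ZZ -mulmxA hc mul_mx_scalar.
Qed.

Lemma Ys_vec s i y : inS y (U i) -> Ys s *m y = P U (fs s i) *m (Z *m y).
Proof.
move=> hy; rewrite /Ys mulmx_suml (bigD1 i) //= -!mulmxA (P_id hy) big1 ?addr0 // => k ki.
by rewrite -!mulmxA (P_0 hU ki hy) !mulmx0.
Qed.

Lemma Zpres i y : inS y (U i) -> inS (Z *m y) (U i).
Proof.
have p0 : (0 < p)%N by case: p podd.
pose o := Ordinal p0.
have [x [hx xnz]] : exists x, inS x (U o) /\ x != 0.
  by apply: nz_inS; case: hU => -[].
have Zxnz : Z *m x != 0.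
  by apply: contra xnz => /eqP h; rewrite -[x]mul1mx -ZZ -mulmxA h mulmx0.
have [j hj] : exists j, P U j *m (Z *m x) != 0.
  case: (boolP [exists j, P U j *m (Z *m x) != 0]) => [/existsP//|/existsPn hn].
  exfalso; move/negP: Zxnz; apply; rewrite -[Z *m x]mul1mx -(sumP hU) mulmx_suml.
  by rewrite big1 // => k _; apply/eqP; move: (hn k); rewrite negbK.
set s := val j.
have fo : fs s o = j by apply: val_inj; rewrite fs_val /= add0n modn_small // ltn_ord.
have [c hc] := Ys_scal s.
have hmap k w : inS w (U k) -> c != 0 /\ inS (Z *m w) (U (fs s k)).
  move=> hw; have cnz : c != 0.
    apply: contra hj => /eqP c0; rewrite -fo -(Ys_vec s hx) hc c0 scale0r mul0mx.
    by [].
  split => //; have := Ys_vec s hw; rewrite hc -scalemxAl => e.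
  have -> : Z *m w = c^-1 *: (c *: (Z *m w)) by rewrite scalerA mulVf // scale1r.
  by apply: inSZ; rewrite e; apply: P_in.
have [cnz h1] := hmap o x hx.
have h2 := (hmap _ _ h1).2; rewrite mulmxA ZZ mul1mx fo in h2.
have ffo : fs s j = o.
  apply/eqP; apply/negPn/negP => ne; move/eqP: xnz; apply.
  exact: (@cyc_disj n p Bs U hU _ _ _ ne h2 hx).
have s0 : s = 0%N.
  move: (congr1 val ffo); rewrite fs_val /= -/s => e.
  have : (p %| s * 2)%N by rewrite muln2 -addnn /dvdn e.
  rewrite Gauss_dvdl ?coprimen2 // /dvdn modn_small ?ltn_ord //.
  by move/eqP.
move=> hy; have := (hmap i y hy).2; by rewrite s0.
Qed.


Lemma p_gt0 : (0 < p)%N.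
Proof. by case: p podd. Qed.

Lemma QV_pres (j : 'I_2) i y : inS y (U i) -> inS (P V j *m y) (U i).
Proof.
move=> hy.
have e0 : Q0 *m y = 2%:R^-1 *: (y + Z *m y).
  have -> : y + Z *m y = 2%:R *: (Q0 *m y).
    have e : 1%:M + Z = 2%:R *: Q0.
      by rewrite /Z -Q01 scaler_nat mulr2n addrACA subrr addr0.
    by rewrite -{1}[y]mul1mx -mulmxDl e -scalemxAl.
  by rewrite scalerA mulVf ?scale1r // pnatr_eq0.
have h0 : inS (Q0 *m y) (U i) by rewrite e0; apply: inSZ; apply: inSD => //; exact: Zpres.
case: (eqVneq j ord0) => [->|j0]; first exact: h0.
have -> : j = ord_max by case: j j0 => [[|[|j]] hj] //= _; apply: val_inj.
have -> : Q1 *m y = y - Q0 *m y.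
  by apply/eqP; rewrite eq_sym subr_eq -mulmxDl addrC Q01 mul1mx.
by apply: inSB.
Qed.

Definition mp (k : 'I_(p * 2)) : 'I_p := Ordinal (ltn_pmod k p_gt0).
Definition m2 (k : 'I_(p * 2)) : 'I_2 := Ordinal (ltn_pmod k (isT : (0 < 2)%N)).
Definition WW k := (U (mp k) :&: V (m2 k))%MS.

Lemma crt_ex i (j : 'I_2) : exists k, mp k = i /\ m2 k = j.
Proof.
have oj : (odd j : nat) = j by case: j => [[|[|j]] hj].
have lt : (i + (if odd i == odd j then 0 else p) < p * 2)%N.
  by rewrite muln2 -addnn; case: ifP => _; rewrite ?addn0; [apply: ltn_addr | rewrite ltn_add2r].
exists (Ordinal lt); split; apply: val_inj => /=.
  by case: ifP => _; rewrite ?addn0 ?modnDr modn_small.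
rewrite modn2 oddD -[X in _ = X]oj; case: ifP => [/eqP e|/negbT]; first by rewrite /= addbF e.
by rewrite podd addbT; case: (odd i); case: (odd j).
Qed.

Lemma crt_inj k k' : mp k = mp k' -> m2 k = m2 k' -> k = k'.
Proof.
move=> /(congr1 val) /= e1 /(congr1 val) /= e2; apply: val_inj => /=.
have : (k == k' %[mod p * 2])%N.
  by rewrite chinese_remainder ?coprimen2 // e1 e2 !eqxx.
by rewrite !modn_small // => /eqP.
Qed.

Lemma WW_in i (j : 'I_2) k y : mp k = i -> m2 k = j -> inS y (U i) -> inS (P V j *m y) (WW k).
Proof.
move=> <- <- hy; rewrite /WW inS_cap; apply/andP; split; first exact: QV_pres.
exact: P_in.
Qed.

Lemma mpS k : mp (ordS k) = ordS (mp k).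
Proof.
apply: val_inj => /=; rewrite modn_dvdm ?dvdn_mulr //.
by rewrite -[in RHS]addn1 modnDml addn1.
Qed.

Lemma m2S k : m2 (ordS k) = ordS (m2 k).
Proof.
apply: val_inj => /=; rewrite modn_dvdm ?dvdn_mull //.
by rewrite -[in RHS]addn1 modnDml addn1.
Qed.

Lemma WW_map k x B : B \in Bs -> inS x (WW k) -> inS (B *m x) (WW (ordS k)).
Proof.
move=> hB; rewrite /WW !inS_cap mpS m2S => /andP[h1 h2].
by rewrite (cyc_map hU hB h1) (cyc_map hV2 hB h2).
Qed.


Lemma y_split (y : 'cV[C]_n) : y = Q0 *m y + Q1 *m y.
Proof. by rewrite -mulmxDl Q01 mul1mx. Qed.

Lemma WW_cyc : cyclic_decomp Bs WW.
Proof.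
have hUe : (\sum_(i < p) U i :=: 1%:M)%MS by case: hU => -[].
have inWW i y : inS y (U i) -> inS y (\sum_k WW k)%MS.
  move=> hy; rewrite [y]y_split; apply: inSD.
    have [k [e1 e2]] := crt_ex i ord0; apply: (inS_sumsI (i := k)) => //.
    exact: WW_in e1 e2 hy.
  have [k [e1 e2]] := crt_ex i ord_max; apply: (inS_sumsI (i := k)) => //.
  exact: WW_in e1 e2 hy.
have orth k k' x y : k != k' -> inS x (WW k) -> inS y (WW k') -> adj x *m y = 0.
  rewrite /WW !inS_cap => kk /andP[x1 x2] /andP[y1 y2].
  case: (eqVneq (mp k) (mp k')) => [e1|n1]; last exact: (@cyc_orth n p Bs U hU _ _ _ _ n1 x1 y1).
  case: (eqVneq (m2 k) (m2 k')) => [e2|n2]; last exact: (@cyc_orth n 2 Bs V hV2 _ _ _ _ n2 x2 y2).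
  by move: kk; rewrite (crt_inj e1 e2) eqxx.
split; last by move=> k x B hB hx; apply: WW_map.
split => //.
- move=> k; apply/negP => /eqP W0.
  have step k1 : WW (ordS k1) = 0 -> WW k1 = 0.
    move=> h; apply: eq0S => x hx; apply: (kraus1 hIQC) => B hB.
    by apply: inS_0; rewrite -h; apply: WW_map.
  have itst t (k1 : 'I_(p * 2)) : WW (iter t (@ordS _) k1) = 0 -> WW k1 = 0.
    elim: t k1 => [//|t IH] k1; rewrite iterSr => /IH; exact: step.
  have all0 k1 : WW k1 = 0.
    apply: (itst (k + p * 2 - k1)%N); rewrite -W0; congr (WW _); apply: val_inj.
    rewrite iter_ordS_val subnKC ?modnDr ?modn_small //.
    exact: leq_trans (ltnW (ltn_ord k1)) (leq_addl _ _).
  pose o := Ordinal p_gt0.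
  have [x [hx xnz]] : exists x, inS x (U o) /\ x != 0 by apply: nz_inS; case: hU => -[].
  move/eqP: xnz; apply; rewrite [x]y_split.
  have [k0 [e1 e2]] := crt_ex o ord0; have [k1 [f1 f2]] := crt_ex o ord_max.
  have := WW_in e1 e2 hx; have := WW_in f1 f2 hx; rewrite !all0 => /inS_0 -> /inS_0 ->.
  by rewrite addr0.
- by apply: orth_mxdirect => k k' kk x y; apply: orth.
- apply/eqmxP/andP; split; first exact: submx1.
  apply: submx_trans (_ : (\sum_(i < p) U i <= _)%MS); first by rewrite hUe.
  by apply/sumsmx_subP => i _; apply: subS => y; apply: inWW.
- by move=> i j ij x y hx hy; apply: (orth i j x y ij hx hy).
Qed.

End DirB.

Section Final.
Variables (n : nat) (Bs : seq 'M[C]_n).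

Lemma IQC_npos : IQC Bs -> (0 < n)%N.
Proof.
case=> _ _ [rho [[_ tr1] _ _ _]]; case: (posnP n) => // n0.
move: tr1; rewrite /mxtrace big1 => [/eqP|i]; first by rewrite eq_sym oner_eq0.
by have := ltn_ord i; rewrite {2}n0.
Qed.

Lemma cyc_len m (U : 'I_m -> 'M[C]_n) : cyclic_decomp Bs U -> (m <= n)%N.
Proof.
case=> -[nz dx _ _] _; move: dx; rewrite mxdirectE /= => /eqP e.
have := rank_leq_col (\sum_(i < m) U i)%MS; rewrite e.
apply: leq_trans; rewrite -[X in (X <= _)%N]card_ord -sum1_card.
by apply: leq_sum => i _; rewrite lt0n mxrank_eq0 nz.
Qed.

Lemma cyc_pos m (U : 'I_m -> 'M[C]_n) : cyclic_decomp Bs U -> (0 < n)%N -> (0 < m)%N.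
Proof.
move=> hU npos; case: (posnP m) => // m0.
pose y : 'cV[C]_n := delta_mx (Ordinal npos) ord0.
have ynz : y != 0.
  apply/negP => /eqP/matrixP/(_ (Ordinal npos) ord0); rewrite !mxE !eqxx => /eqP.
  by rewrite oner_eq0.
have [xs [_ ey _]] := cyc_decomp hU y.
apply: contraNeq ynz => _; rewrite ey big1 // => i _.
by have := ltn_ord i; rewrite {2}m0.
Qed.

Lemma one_cyc : (0 < n)%N -> exists U : 'I_1 -> 'M[C]_n, cyclic_decomp Bs U.
Proof.
move=> npos; exists (fun _ => 1%:M); split; last by move=> *; apply: inS1.
split.
- move=> _; apply/negP => /eqP/matrixP/(_ (Ordinal npos) (Ordinal npos)).
  by rewrite !mxE eqxx => /eqP; rewrite oner_eq0.
- by apply: orth_mxdirect => i j ij; move: ij; rewrite !ord1 eqxx.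
- by rewrite big_ord1.
- by move=> i j ij; move: ij; rewrite !ord1 eqxx.
Qed.

End Final.

Lemma ex_max (Pr : nat -> Prop) b : Pr 1%N -> (forall m, Pr m -> (m <= b)%N) ->
  exists p, Pr p /\ forall m, Pr m -> (m <= p)%N.
Proof.
move=> h1 hb.
pose pb m := if excluded_middle_informative (Pr m) then true else false.
have pbP m : pb m = true <-> Pr m.
  by rewrite /pb; case: excluded_middle_informative.
have ex : exists m, pb m by exists 1%N; apply/pbP.
have ub : forall m, pb m -> (m <= b)%N by move=> m /pbP; apply: hb.
case: (ex_maxnP ex ub) => p hp hmax; exists p; split; first by apply/pbP.
by move=> m /pbP; apply: hmax.
Qed.

End Basics.

Theorem lemma11p4 (C : numClosedFieldType) (n : nat) (Bs : seq 'M[C]_n) :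
  IQC Bs ->
  ((exists U : 'I_2 -> 'M[C]_n, iso2_decomp Bs U) <->
   (exists p : nat, is_period Bs p /\ ~~ odd p)).
Proof.
move=> hI; have npos := IQC_npos hI; split.
  case=> V hV.
  have [p [[U hU] hmax]] := ex_max (Pr := fun m => exists U : 'I_m -> 'M[C]_n, cyclic_decomp Bs U)
      (b := n) (one_cyc Bs npos) (fun m (h : exists U : 'I_m -> 'M[C]_n, cyclic_decomp Bs U) => let: ex_intro U hU := h in cyc_len hU).
  exists p; split.
    by split; [exists U | move=> m U' hU'; apply: hmax; exists U'].
  apply/negP => podd.
  have := hmax _ (ex_intro _ _ (WW_cyc hI hU hV podd)).
  have p0 := cyc_pos hU npos.
  move=> h; lia.
case=> p [[[U hU] hmax] pev].
have p0 := cyc_pos hU npos.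
have p1 : (1 < p)%N by case: p U hU hmax pev p0 => [|[|p]].
by exists (VA U); apply: dirA.
Qed.
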